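(* Let $m,n\ge1$, $a\in(0,\infty)^m$, $b\in(0,\infty)^n$, and let $\Omega$ be a real $m\times n$ matrix. Let $(A,B)_0$ be an arbitrary point in the interior of $\tilde{\mathcal A}$, and define recursively $(A,B)_{k+1}=T_2(T_1((A,B)_k))$. Then $$\lim_{k\to\infty}F((A,B)_k)=\max_{(A,B)\in\tilde{\mathcal A}}F(A,B).$$
   Context: $\mathcal A$ is the set of pairs $(A,B)$ of $(m+1)\times(n+1)$ real matrices (indices $i=0,\dots,m$, $j=0,\dots,n$) with: $A_{ij},B_{ij}\ge0$; $a_i=\sum_{j=0}^nA_{ij}$ for $i=1,\dots,m$; $A_{0j}=0$ for all $j$; $b_j=\sum_{i=0}^mB_{ij}$ for $j=1,\dots,n$; $B_{i0}=0$ for all $i$. $F(A,B)=\sum_{i=1}^m\sum_{j=1}^n\sqrt{A_{ij}B_{ij}}\,\Omega_{ij}$. $\tilde{\mathcal A}\subset\mathcal A$ consists of those $(A,B)$ with: (1) $A_{ij}=B_{ij}=0$ whenever $i,j\ge1$ and $\Omega_{ij}\le0$; (2) for $j\ge1$, $B_{0j}=0$ if there is $i\ge1$ with $\Omega_{ij}>0$; (3) for $i\ge1$, $A_{i0}=0$ if there is $j\ge1$ with $\Omega_{ij}>0$. $T_1(A,B)=(E,B)$ where $E_{ij}=A_{ij}$ if $i=0$ or $j=0$, and otherwise $E_{ij}=a_iB_{ij}\Omega_{ij}^2/\sum_{k=1}^nB_{ik}\Omega_{ik}^2$ if this denominator is positive and $E_{ij}=0$ otherwise. $T_2(A,B)=(A,E)$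 where $E_{ij}=B_{ij}$ if $i=0$ or $j=0$, and otherwise $E_{ij}=b_jA_{ij}\Omega_{ij}^2/\sum_{k=1}^mA_{kj}\Omega_{kj}^2$ if this denominator is positive and $E_{ij}=0$ otherwise. ''Interior'' refers to the interior of the convex set $\tilde{\mathcal A}$ (relative to the affine space it spans). *)

(* Defs.v *)
From HB Require Import structures.
From mathcomp Require Import all_boot all_order all_algebra.
From mathcomp Require Import all_classical all_reals all_analysis.
Set Implicit Arguments. Unset Strict Implicit. Unset Printing Implicit Defensive.
Import Order.TTheory GRing.Theory Num.Theory.
Local Open Scope ring_scope.

Section Defs.
Variables (R : realType) (m n : nat).
Variables (a : 'I_m -> R) (b : 'I_n -> R) (Om : 'M[R]_(m, n)).

(* Matrices indexed by 0..m (rows) and 0..n (columns); the index i >= 1 of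
   the paper is [lift ord0 i'] for i' : 'I_m (paper index i'+1). *)
Definition mpair := ('M[R]_(m.+1, n.+1) * 'M[R]_(m.+1, n.+1))%type.

Definition inA (p : mpair) : Prop :=
  let A := p.1 in let B := p.2 in
  (forall i j, 0 <= A i j) /\ (forall i j, 0 <= B i j) /\
  (forall i : 'I_m, a i = \sum_(j < n.+1) A (lift ord0 i) j) /\
  (forall j, A ord0 j = 0) /\
  (forall j : 'I_n, b j = \sum_(i < m.+1) B i (lift ord0 j)) /\
  (forall i, B i ord0 = 0).

Definition Fobj (p : mpair) : R :=
  \sum_(i < m) \sum_(j < n)
     Num.sqrt (p.1 (lift ord0 i) (lift ord0 j) * p.2 (lift ord0 i) (lift ord0 j))
     * Om i j.

Definition inAt (p : mpair) : Prop :=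
  inA p /\
  (forall (i : 'I_m) (j : 'I_n), Om i j <= 0 ->
      p.1 (lift ord0 i) (lift ord0 j) = 0 /\ p.2 (lift ord0 i) (lift ord0 j) = 0) /\
  (forall j : 'I_n, (exists i : 'I_m, 0 < Om i j) -> p.2 ord0 (lift ord0 j) = 0) /\
  (forall i : 'I_m, (exists j : 'I_n, 0 < Om i j) -> p.1 (lift ord0 i) ord0 = 0).

Definition T1 (p : mpair) : mpair :=
  let A := p.1 in let B := p.2 in
  (\matrix_(i, j)
     match unlift ord0 i, unlift ord0 j with
     | Some i', Some j' =>
         let d := \sum_(k < n) B i (lift ord0 k) * Om i' k ^+ 2 in
         if 0 < d then a i' * B i j * Om i' j' ^+ 2 / d else 0
     | _, _ => A i j
     end, B).

Definition T2 (p : mpair) : mpair :=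
  let A := p.1 in let B := p.2 in
  (A, \matrix_(i, j)
     match unlift ord0 i, unlift ord0 j with
     | Some i', Some j' =>
         let d := \sum_(k < m) A (lift ord0 k) j * Om k j' ^+ 2 in
         if 0 < d then b j' * A i j * Om i' j' ^+ 2 / d else 0
     | _, _ => B i j
     end).

Definition affine_hull (S : mpair -> Prop) (q : mpair) : Prop :=
  exists (N : nat) (lam : 'I_N -> R) (pts : 'I_N -> mpair),
    (forall k, S (pts k)) /\ \sum_(k < N) lam k = 1 /\
    q.1 = \sum_(k < N) lam k *: (pts k).1 /\
    q.2 = \sum_(k < N) lam k *: (pts k).2.

Definition rel_interior (S : mpair -> Prop) (p : mpair) : Prop :=
  S p /\ exists2 eps : R, 0 < eps &
    forall q, affine_hull S q ->
      (forall i j, `|q.1 i j - p.1 i j| < eps) ->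
      (forall i j, `|q.2 i j - p.2 i j| < eps) -> S q.

Definition iterT (p0 : mpair) (k : nat) : mpair :=
  iter k (fun p => T2 (T1 p)) p0.

End Defs.

(* Main.v *)
Require Import Defs.
From HB Require Import structures.
From mathcomp Require Import all_boot all_order all_algebra.
From mathcomp Require Import all_classical all_reals all_analysis.
From mathcomp Require Import ring lra.
Import Order.TTheory GRing.Theory Num.Theory.
Import numFieldNormedType.Exports.
Local Open Scope classical_set_scope.
Local Open Scope ring_scope.
Set Implicit Arguments. Unset Strict Implicit. Unset Printing Implicit Defensive.

Section Inv.
Variables (R : realType) (m n : nat) (a : 'I_m -> R) (b : 'I_n -> R) (Om : 'M[R]_(m, n)).
Hypotheses (apos : forall i, 0 < a i) (bpos : forall j, 0 < b j).

Definition Al (p : mpair R m n) (i : 'I_m) (j : 'I_n) := p.1 (lift ord0 i) (lift ord0 j).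
Definition Bl (p : mpair R m n) (i : 'I_m) (j : 'I_n) := p.2 (lift ord0 i) (lift ord0 j).
Definition posP (p : mpair R m n) :=
  forall i j, 0 < Om i j -> 0 < Al p i j /\ 0 < Bl p i j.
Definition Srow (p : mpair R m n) i := \sum_(k < n) Bl p i k * Om i k ^+ 2.
Definition Ccol (p : mpair R m n) j := \sum_(k < m) Al p k j * Om k j ^+ 2.

Lemma T1E p i j : Al (T1 a Om p) i j =
  if 0 < Srow p i then a i * Bl p i j * Om i j ^+ 2 / Srow p i else 0.
Proof. by rewrite /Al /T1 /= mxE !liftK. Qed.
Lemma T1_0 p j : (T1 a Om p).1 ord0 j = p.1 ord0 j.
Proof. by rewrite /T1 /= mxE unlift_none. Qed.
Lemma T1_c0 p i : (T1 a Om p).1 i ord0 = p.1 i ord0.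
Proof. by rewrite /T1 /= mxE unlift_none; case: (unlift ord0 i). Qed.
Lemma T1_2 p : (T1 a Om p).2 = p.2. Proof. by []. Qed.

Lemma T2E p i j : Bl (T2 b Om p) i j =
  if 0 < Ccol p j then b j * Al p i j * Om i j ^+ 2 / Ccol p j else 0.
Proof. by rewrite /Bl /T2 /= mxE !liftK. Qed.
Lemma T2_0 p j : (T2 b Om p).2 ord0 j = p.2 ord0 j.
Proof. by rewrite /T2 /= mxE unlift_none. Qed.
Lemma T2_r0 p i : (T2 b Om p).2 i ord0 = p.2 i ord0.
Proof. by rewrite /T2 /= mxE unlift_none; case: (unlift ord0 i). Qed.
Lemma T2_1 p : (T2 b Om p).1 = p.1. Proof. by []. Qed.

Lemma sum_ge_term (I : finType) (F : I -> R) i :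
  (forall k, 0 <= F k) -> F i <= \sum_k F k.
Proof. by move=> F0; rewrite (bigD1 i) //= lerDl sumr_ge0. Qed.

Lemma sum_gt0_ex (I : finType) (F : I -> R) :
  0 < \sum_k F k -> exists k, 0 < F k.
Proof.
move=> s0; apply/not_existsP => /= H.
have : \sum_k F k <= 0.
  by apply: sumr_le0 => k _; rewrite leNgt; apply/negP => /(H k).
by rewrite leNgt s0.
Qed.

Lemma rowsum p i : inAt a b Om p ->
  a i = p.1 (lift ord0 i) ord0 + \sum_j Al p i j.
Proof. by case=> [[_ [_ [Ar _]]] _]; rewrite Ar big_ord_recl. Qed.

Lemma colsum p j : inAt a b Om p ->
  b j = p.2 ord0 (lift ord0 j) + \sum_i Bl p i j.
Proof. by case=> [[_ [_ [_ [_ [Bc _]]]]] _]; rewrite Bc big_ord_recl. Qed.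

Lemma Srow_ge0 p i : inAt a b Om p -> 0 <= Srow p i.
Proof.
case=> [[_ [B0 _]] _]; apply: sumr_ge0 => k _.
by apply: mulr_ge0 => //; rewrite ?sqr_ge0 ?B0.
Qed.

Lemma Ccol_ge0 p j : inAt a b Om p -> 0 <= Ccol p j.
Proof.
case=> [[A0 _] _]; apply: sumr_ge0 => k _.
by apply: mulr_ge0 => //; rewrite ?sqr_ge0 ?A0.
Qed.

Lemma Srow_gt0 p i j : inAt a b Om p -> posP p -> 0 < Om i j -> 0 < Srow p i.
Proof.
move=> H P O; rewrite /Srow.
have F0 : forall k, 0 <= Bl p i k * Om i k ^+ 2.
  by case: H => [[_ [B0 _]] _] k; apply: mulr_ge0 => //; rewrite ?sqr_ge0 ?B0.
apply: lt_le_trans (@sum_ge_term _ _ j F0).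
by apply: mulr_gt0; [case: (P i j O) | rewrite exprn_gt0].
Qed.

Lemma Ccol_gt0 p i j : inAt a b Om p -> posP p -> 0 < Om i j -> 0 < Ccol p j.
Proof.
move=> H P O; rewrite /Ccol.
have F0 : forall k, 0 <= Al p k j * Om k j ^+ 2.
  by case: H => [[A0 _] _] k; apply: mulr_ge0 => //; rewrite ?sqr_ge0 ?A0.
apply: lt_le_trans (@sum_ge_term _ _ i F0).
by apply: mulr_gt0; [case: (P i j O) | rewrite exprn_gt0].
Qed.

Lemma Srow_ex p i : inAt a b Om p -> 0 < Srow p i -> exists j, 0 < Om i j.
Proof.
move=> [_ [C1 _]] /sum_gt0_ex [k]; case: (ltrP 0 (Om i k)) => Ok; first by exists k.
by rewrite /Bl (proj2 (C1 _ _ Ok)) mul0r ltxx.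
Qed.

Lemma Ccol_ex p j : inAt a b Om p -> 0 < Ccol p j -> exists i, 0 < Om i j.
Proof.
move=> [_ [C1 _]] /sum_gt0_ex [k]; case: (ltrP 0 (Om k j)) => Ok; first by exists k.
by rewrite /Al (proj1 (C1 _ _ Ok)) mul0r ltxx.
Qed.

End Inv.

Section Inv2.
Variables (R : realType) (m n : nat) (a : 'I_m -> R) (b : 'I_n -> R) (Om : 'M[R]_(m, n)).
Hypotheses (apos : forall i, 0 < a i) (bpos : forall j, 0 < b j).

Lemma T1_inv p : inAt a b Om p -> posP Om p ->
  inAt a b Om (T1 a Om p) /\ posP Om (T1 a Om p).
Proof.
move=> H P; have H' := H.
case: H' => [[A0 [B0 [Ar [A0j [Bc Bi0]]]]] [C1 [C2 C3]]].
have E0 : forall i j, 0 <= Al (T1 a Om p) i j.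
  move=> i j; rewrite T1E; case: ifP => // S0.
  apply: divr_ge0; last exact: ltW.
  by apply: mulr_ge0; [apply: mulr_ge0; [exact: ltW | exact: B0] | exact: sqr_ge0].
split; last first.
  move=> i j O; split; last by case: (P i j O).
  rewrite (T1E a Om p i j) (Srow_gt0 H P O).
  apply: divr_gt0; last exact: (Srow_gt0 H P O).
  by apply: mulr_gt0; [apply: mulr_gt0; [exact: apos | by case: (P i j O)] | rewrite exprn_gt0].
split; last first.
  split.
    move=> i j O; split; last exact: (proj2 (C1 i j O)).
    change (Al (T1 a Om p) i j = 0); rewrite T1E; case: ifP => // _.
    by move: (proj2 (C1 i j O)); rewrite /Bl => ->; rewrite mulr0 !mul0r.
  split; first exact: C2.
  by move=> i Hi; rewrite T1_c0; apply: C3.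
split.
  move=> i j; case: (unliftP ord0 i) => [i'|] ->; last by rewrite T1_0 A0j.
  case: (unliftP ord0 j) => [j'|] ->; last by rewrite T1_c0 A0.
  exact: (E0 i' j').
split; first exact: B0.
split.
  move=> i; rewrite big_ord_recl T1_c0.
  case: (ltrP 0 (Srow Om p i)) => S0.
    have [j Oj] := Srow_ex H S0.
    rewrite (C3 i (ex_intro _ j Oj)) add0r.
    under eq_bigr => k _ do rewrite -/(Al (T1 a Om p) i k) T1E S0.
    rewrite (_ : \sum_(k < n) _ = a i * Srow Om p i / Srow Om p i).
      by rewrite mulfK // gt_eqF.
    by rewrite /Srow mulr_sumr mulr_suml; apply: eq_bigr => k _; ring.
  rewrite big1 ?addr0.
    rewrite (rowsum i H) big1 ?addr0 //.
    move=> j _; case: (ltrP 0 (Om i j)) => O; last exact: (proj1 (C1 i j O)).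
    by have := Srow_gt0 H P O; rewrite ltNge S0.
  by move=> j _; rewrite -/(Al (T1 a Om p) i j) T1E ltNge S0.
split; first by move=> j; rewrite T1_0 A0j.
split; [exact: Bc | exact: Bi0].
Qed.

End Inv2.

Section Inv3.
Variables (R : realType) (m n : nat) (a : 'I_m -> R) (b : 'I_n -> R) (Om : 'M[R]_(m, n)).
Hypotheses (apos : forall i, 0 < a i) (bpos : forall j, 0 < b j).

Lemma T2_inv p : inAt a b Om p -> posP Om p ->
  inAt a b Om (T2 b Om p) /\ posP Om (T2 b Om p).
Proof.
move=> H P; have H' := H.
case: H' => [[A0 [B0 [Ar [A0j [Bc Bi0]]]]] [C1 [C2 C3]]].
have E0 : forall i j, 0 <= Bl (T2 b Om p) i j.
  move=> i j; rewrite (T2E b Om p i j); case: ifP => // S0.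
  apply: divr_ge0; last exact: ltW.
  by apply: mulr_ge0; [apply: mulr_ge0; [exact: ltW | exact: A0] | exact: sqr_ge0].
split; last first.
  move=> i j O; split; first by case: (P i j O).
  rewrite (T2E b Om p i j) (Ccol_gt0 H P O).
  apply: divr_gt0; last exact: (Ccol_gt0 H P O).
  by apply: mulr_gt0; [apply: mulr_gt0; [exact: bpos | by case: (P i j O)] | rewrite exprn_gt0].
split; last first.
  split.
    move=> i j O; split; first exact: (proj1 (C1 i j O)).
    change (Bl (T2 b Om p) i j = 0); rewrite (T2E b Om p i j); case: ifP => // _.
    by move: (proj1 (C1 i j O)); rewrite /Al => ->; rewrite mulr0 !mul0r.
  split; last exact: C3.
  by move=> j Hj; rewrite T2_0; apply: C2.
split; first exact: A0.
split.
  move=> i j; case: (unliftP ord0 j) => [j'|] ->; last by rewrite T2_r0 Bi0.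
  case: (unliftP ord0 i) => [i'|] ->; last by rewrite T2_0 B0.
  exact: (E0 i' j').
split; first exact: Ar.
split; first exact: A0j.
split; last by move=> i; rewrite T2_r0 Bi0.
move=> j; rewrite big_ord_recl T2_0.
case: (ltrP 0 (Ccol Om p j)) => S0.
  have [i Oi] := Ccol_ex H S0.
  rewrite (C2 j (ex_intro _ i Oi)) add0r.
  under eq_bigr => k _ do rewrite -/(Bl (T2 b Om p) k j) (T2E b Om p k j) S0.
  rewrite (_ : \sum_(k < m) _ = b j * Ccol Om p j / Ccol Om p j).
    by rewrite mulfK // gt_eqF.
  by rewrite /Ccol mulr_sumr mulr_suml; apply: eq_bigr => k _; ring.
rewrite big1 ?addr0.
  rewrite (colsum j H) big1 ?addr0 //.
  move=> i _; case: (ltrP 0 (Om i j)) => O; last exact: (proj2 (C1 i j O)).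
  by have := Ccol_gt0 H P O; rewrite ltNge S0.
by move=> i _; rewrite -/(Bl (T2 b Om p) i j) (T2E b Om p i j) ltNge S0.
Qed.

End Inv3.

Section Fval.
Variables (R : realType) (m n : nat) (a : 'I_m -> R) (b : 'I_n -> R) (Om : 'M[R]_(m, n)).
Hypotheses (apos : forall i, 0 < a i) (bpos : forall j, 0 < b j).

Lemma FobjE p : Fobj Om p = \sum_i \sum_j Num.sqrt (Al p i j * Bl p i j) * Om i j.
Proof. by []. Qed.

Lemma Fobj_ge0 p : inAt a b Om p -> 0 <= Fobj Om p.
Proof.
move=> [[A0 [B0 _]] [C1 _]]; rewrite FobjE.
apply: sumr_ge0 => i _; apply: sumr_ge0 => j _.
case: (ltrP 0 (Om i j)) => O; first by apply: mulr_ge0 => //; exact: ltW.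
by rewrite /Al (proj1 (C1 i j O)) mul0r sqrtr0 mul0r.
Qed.

Lemma F_T1 p : inAt a b Om p -> posP Om p ->
  Fobj Om (T1 a Om p) = \sum_i Num.sqrt (a i / Srow Om p i) * Srow Om p i.
Proof.
move=> H P; rewrite FobjE; apply: eq_bigr => i _.
rewrite /Srow mulr_sumr; apply: eq_bigr => j _.
have [_ [C1 _]] := H.
case: (ltrP 0 (Om i j)) => O; last first.
  have e : Bl p i j = 0 by exact: (proj2 (C1 i j O)).
  by change (Bl (T1 a Om p) i j) with (Bl p i j); rewrite e !(mulr0, mul0r, sqrtr0).
have S0 := Srow_gt0 H P O.
rewrite (T1E a Om p i j) S0.
have -> : a i * Bl p i j * Om i j ^+ 2 / Srow Om p i * Bl (T1 a Om p) i j =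
   (a i / Srow Om p i) * (Bl p i j * Om i j) ^+ 2 by rewrite /Bl /=; ring.
rewrite sqrtrM; last by apply: divr_ge0; apply: ltW.
rewrite sqrtr_sqr ger0_norm; first ring.
by apply: mulr_ge0; [case: (P i j O) => _ /ltW | exact: ltW].
Qed.

Lemma F_T2 p : inAt a b Om p -> posP Om p ->
  Fobj Om (T2 b Om p) = \sum_j Num.sqrt (b j / Ccol Om p j) * Ccol Om p j.
Proof.
move=> H P; rewrite FobjE exchange_big; apply: eq_bigr => j _.
rewrite /Ccol mulr_sumr; apply: eq_bigr => i _.
have [_ [C1 _]] := H.
case: (ltrP 0 (Om i j)) => O; last first.
  have e : Al p i j = 0 by exact: (proj1 (C1 i j O)).
  by change (Al (T2 b Om p) i j) with (Al p i j); rewrite e !(mulr0, mul0r, sqrtr0).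
have S0 := Ccol_gt0 H P O.
rewrite (T2E b Om p i j) S0.
have -> : Al (T2 b Om p) i j * (b j * Al p i j * Om i j ^+ 2 / Ccol Om p j) =
   (b j / Ccol Om p j) * (Al p i j * Om i j) ^+ 2 by rewrite /Al /=; ring.
rewrite sqrtrM; last by apply: divr_ge0; apply: ltW.
rewrite sqrtr_sqr ger0_norm; first ring.
by apply: mulr_ge0; [case: (P i j O) => /ltW | exact: ltW].
Qed.

Lemma rowsum_le q i : inAt a b Om q -> \sum_j Al q i j <= a i.
Proof.
move=> Hq; rewrite (rowsum i Hq) lerDr.
by case: Hq => [[A0 _] _]; apply: A0.
Qed.

Lemma colsum_le q j : inAt a b Om q -> \sum_i Bl q i j <= b j.
Proof.
move=> Hq; rewrite (colsum j Hq) lerDr.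
by case: Hq => [[_ [B0 _]] _]; apply: B0.
Qed.

Lemma q1_bound p q : inAt a b Om p -> posP Om p -> inAt a b Om q ->
  \sum_i \sum_j Al q i j * (Num.sqrt (a i / Srow Om p i) * Srow Om p i / a i)
  <= Fobj Om (T1 a Om p).
Proof.
move=> H P Hq; rewrite F_T1 //; apply: ler_sum => i _.
rewrite -mulr_suml.
have c0 : 0 <= Num.sqrt (a i / Srow Om p i) * Srow Om p i / a i.
  by apply: divr_ge0; [apply: mulr_ge0 => //; exact: (Srow_ge0 _ H) | exact: ltW].
apply: le_trans (ler_wpM2r c0 (rowsum_le i Hq)) _.
by rewrite mulrC divfK // gt_eqF.
Qed.

Lemma q2_bound p q : inAt a b Om p -> posP Om p -> inAt a b Om q ->
  \sum_i \sum_j Bl q i j * (Num.sqrt (b j / Ccol Om p j) * Ccol Om p j / b j)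
  <= Fobj Om (T2 b Om p).
Proof.
move=> H P Hq; rewrite F_T2 // exchange_big; apply: ler_sum => j _.
rewrite -mulr_suml.
have c0 : 0 <= Num.sqrt (b j / Ccol Om p j) * Ccol Om p j / b j.
  by apply: divr_ge0; [apply: mulr_ge0 => //; exact: (Ccol_ge0 _ H) | exact: ltW].
apply: le_trans (ler_wpM2r c0 (colsum_le j Hq)) _.
by rewrite mulrC divfK // gt_eqF.
Qed.

End Fval.

Section Core.
Variable R : realType.

Lemma ln_le_sub1 (x : R) : 0 < x -> ln x <= x - 1.
Proof.
move=> x0; have := @le_ln1Dx R (x - 1).
rewrite (_ : 1 + (x - 1) = x); last by ring.
by apply; lra.
Qed.

Lemma posE (x : R) : 0 < x -> x \in Num.pos. Proof. by rewrite posrE. Qed.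
Lemma lnM' (x y : R) : 0 < x -> 0 < y -> ln (x * y) = ln x + ln y.
Proof. by move=> x0 y0; rewrite lnM ?posE. Qed.
Lemma ln_div' (x y : R) : 0 < x -> 0 < y -> ln (x / y) = ln x - ln y.
Proof. by move=> x0 y0; rewrite ln_div ?posE. Qed.

Lemma core (w As Bs a b S C Fs G1 G2 : R) :
  0 < w -> 0 < As -> 0 < Bs -> 0 < a -> 0 < b -> 0 < S -> 0 < C ->
  0 < Fs -> 0 < G1 -> 0 < G2 ->
  (w * Num.sqrt (As * Bs) / Fs) * (4%:R * ln Fs - 2%:R * ln G1 - 2%:R * ln G2)
    - 2%:R * (As * (Num.sqrt (a / S) * S / a) / G1 - w * Num.sqrt (As * Bs) / Fs)
    - 2%:R * (Bs * (Num.sqrt (b / C) * C / b) / G2 - w * Num.sqrt (As * Bs) / Fs)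
    <= (w * Num.sqrt (As * Bs) / Fs) * ln (a * b * w ^+ 4 / (S * C)).
Proof.
move=> w0 A0 B0 a0 b0 S0 C0 F0 G10 G20.
set pi := w * Num.sqrt (As * Bs) / Fs.
set q1 := As * (Num.sqrt (a / S) * S / a).
set q2 := Bs * (Num.sqrt (b / C) * C / b).
set s1 := Num.sqrt (a / S); set s2 := Num.sqrt (b / C); set s3 := Num.sqrt (As * Bs).
have s10 : 0 < s1 by rewrite sqrtr_gt0 divr_gt0.
have s20 : 0 < s2 by rewrite sqrtr_gt0 divr_gt0.
have s30 : 0 < s3 by rewrite sqrtr_gt0 mulr_gt0.
have pi0 : 0 < pi by rewrite /pi divr_gt0 // mulr_gt0.
have q10 : 0 < q1 by rewrite /q1 !mulr_gt0 // invr_gt0.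
have q20 : 0 < q2 by rewrite /q2 !mulr_gt0 // invr_gt0.
set x1 := q1 / (pi * G1); set x2 := q2 / (pi * G2).
have x10 : 0 < x1 by rewrite /x1 divr_gt0 // mulr_gt0.
have x20 : 0 < x2 by rewrite /x2 divr_gt0 // mulr_gt0.
have e1 : s1 ^+ 2 = a / S by rewrite sqr_sqrtr // ltW // divr_gt0.
have e2 : s2 ^+ 2 = b / C by rewrite sqr_sqrtr // ltW // divr_gt0.
have e3 : s3 ^+ 2 = As * Bs by rewrite sqr_sqrtr // ltW // mulr_gt0.
have er : a * b * w ^+ 4 / (S * C) = Fs ^+ 4 / (G1 * G2 * x1 * x2) ^+ 2.
  rewrite /x1 /x2 /q1 /q2 /pi.
  have -> : (G1 * G2 * (As * (s1 * S / a) / (w * s3 / Fs * G1)) *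
         (Bs * (s2 * C / b) / (w * s3 / Fs * G2))) ^+ 2 =
      As ^+ 2 * Bs ^+ 2 * s1 ^+ 2 * s2 ^+ 2 * S ^+ 2 * C ^+ 2 * Fs ^+ 4
      / (a ^+ 2 * b ^+ 2 * w ^+ 4 * (s3 ^+ 2) ^+ 2).
    by field; rewrite !gt_eqF.
  rewrite e1 e2 e3; field.
  by rewrite !gt_eqF.
have eln : ln (a * b * w ^+ 4 / (S * C)) =
    4%:R * ln Fs - 2%:R * ln G1 - 2%:R * ln G2 - 2%:R * ln x1 - 2%:R * ln x2.
  have P4 : 0 < Fs ^+ 4 by rewrite exprn_gt0.
  have g12 : 0 < G1 * G2 by apply: mulr_gt0.
  have g123 : 0 < G1 * G2 * x1 by apply: mulr_gt0.
  have g1234 : 0 < G1 * G2 * x1 * x2 by apply: mulr_gt0.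
  have P2 : 0 < (G1 * G2 * x1 * x2) ^+ 2 by apply: exprn_gt0.
  rewrite er (ln_div' P4 P2) (lnXn _ F0) (lnXn _ g1234).
  rewrite (lnM' g123 x20) (lnM' g12 x10) (lnM' G10 G20).
  move: (ln Fs) (ln G1) (ln G2) (ln x1) (ln x2) => u1 u2 u3 u4 u5; ring.
have l1 := ln_le_sub1 x10; have l2 := ln_le_sub1 x20.
rewrite eln.
have h1 : pi * ln x1 <= q1 / G1 - pi.
  apply: le_trans (ler_wpM2l (ltW pi0) l1) _.
  rewrite /x1 (_ : pi * (q1 / (pi * G1) - 1) = q1 / G1 - pi) //.
  by field; rewrite !gt_eqF.
have h2 : pi * ln x2 <= q2 / G2 - pi.
  apply: le_trans (ler_wpM2l (ltW pi0) l2) _.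
  rewrite /x2 (_ : pi * (q2 / (pi * G2) - 1) = q2 / G2 - pi) //.
  by field; rewrite !gt_eqF.
have -> : pi * (4%:R * ln Fs - 2%:R * ln G1 - 2%:R * ln G2 - 2%:R * ln x1 - 2%:R * ln x2)
  = pi * (4%:R * ln Fs - 2%:R * ln G1 - 2%:R * ln G2) - 2%:R * (pi * ln x1)
    - 2%:R * (pi * ln x2) by ring.
by rewrite lerB // ?lerB // ler_wpM2l.
Qed.
End Core.

Section Step.
Variables (R : realType) (m n : nat) (a : 'I_m -> R) (b : 'I_n -> R) (Om : 'M[R]_(m, n)).
Hypotheses (apos : forall i, 0 < a i) (bpos : forall j, 0 < b j).
Variable q : mpair R m n.
Hypothesis Hq : inAt a b Om q.
Hypothesis F0 : 0 < Fobj Om q.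

Definition piw i j := Om i j * Num.sqrt (Al q i j * Bl q i j) / Fobj Om q.

Lemma piw_ge0 i j : 0 <= piw i j.
Proof.
rewrite /piw; case: (ltrP 0 (Om i j)) => O.
  by apply: divr_ge0; [apply: mulr_ge0 => //; exact: ltW | exact: ltW].
have [_ [C1 _]] := Hq.
by rewrite /Al (proj1 (C1 i j O)) mul0r sqrtr0 mulr0 mul0r.
Qed.

Lemma piw_sum : \sum_i \sum_j piw i j = 1.
Proof.
have -> : \sum_i \sum_j piw i j = Fobj Om q / Fobj Om q.
  rewrite {1}FobjE mulr_suml; apply: eq_bigr => i _; rewrite mulr_suml.
  by apply: eq_bigr => j _; rewrite /piw (mulrC (Om i j)).
by rewrite mulfV // gt_eqF.
Qed.

Lemma piw_pos i j : 0 < piw i j -> [/\ 0 < Om i j, 0 < Al q i j & 0 < Bl q i j].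
Proof.
have [[A0 [B0 _]] [C1 _]] := Hq.
rewrite /piw => h.
have O : 0 < Om i j.
  rewrite ltNge; apply/negP => O.
  by move: h; rewrite /Al (proj1 (C1 i j O)) mul0r sqrtr0 mulr0 mul0r ltxx.
split => //.
  rewrite lt_neqAle A0 andbT; apply/negP => /eqP e.
  by move: h; rewrite -e mul0r sqrtr0 mulr0 mul0r ltxx.
rewrite lt_neqAle B0 andbT; apply/negP => /eqP e.
by move: h; rewrite -e mulr0 sqrtr0 mulr0 mul0r ltxx.
Qed.

Lemma piw_ex : exists i j, 0 < piw i j.
Proof.
have := piw_sum; move=> e.
have : 0 < \sum_i \sum_j piw i j by rewrite e ltr01.
move=> /sum_gt0_ex [i] /sum_gt0_ex [j] h; by exists i, j.
Qed.

Lemma sum2B (f g : 'I_m -> 'I_n -> R) :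
  \sum_i \sum_j (f i j - g i j) = \sum_i \sum_j f i j - \sum_i \sum_j g i j.
Proof. by rewrite -sumrB; apply: eq_bigr => i _; rewrite sumrB. Qed.

Lemma sum2Z (c : R) (f : 'I_m -> 'I_n -> R) :
  \sum_i \sum_j (c * f i j) = c * \sum_i \sum_j f i j.
Proof. by rewrite mulr_sumr; apply: eq_bigr => i _; rewrite mulr_sumr. Qed.

Definition Lpot (p : mpair R m n) := \sum_i \sum_j piw i j * ln (Bl p i j).

Lemma step p : inAt a b Om p -> posP Om p ->
  Fobj Om (T1 a Om p) <= Fobj Om q ->
  Fobj Om (T2 b Om (T1 a Om p)) <= Fobj Om q ->
  2%:R * (1 - Fobj Om (T2 b Om (T1 a Om p)) / Fobj Om q)
    <= Lpot (T2 b Om (T1 a Om p)) - Lpot p.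
Proof.
move=> H P G1le G2le.
have [H1 P1] := T1_inv apos H P.
have [H2 P2] := T2_inv bpos H1 P1.
set p1 := T1 a Om p; set p2 := T2 b Om p1.
set Fs := Fobj Om q; set G1 := Fobj Om p1; set G2 := Fobj Om p2.
have [i0 [j0 h0]] := piw_ex.
have [Ox0 _ _] := piw_pos h0.
have G10 : 0 < G1.
  rewrite /G1 /p1 (F_T1 apos H P).
  have t0 : forall i, 0 <= Num.sqrt (a i / Srow Om p i) * Srow Om p i.
    by move=> i; apply: mulr_ge0 => //; apply: Srow_ge0 H.
  apply: lt_le_trans (@sum_ge_term _ _ _ i0 t0).
  have S0 := Srow_gt0 H P Ox0.
  by apply: mulr_gt0 => //; rewrite sqrtr_gt0 divr_gt0.
have G20 : 0 < G2.
  rewrite /G2 /p2 (F_T2 bpos H1 P1).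
  have t0 : forall j, 0 <= Num.sqrt (b j / Ccol Om p1 j) * Ccol Om p1 j.
    by move=> j; apply: mulr_ge0 => //; apply: Ccol_ge0 H1.
  apply: lt_le_trans (@sum_ge_term _ _ _ j0 t0).
  have S0 := Ccol_gt0 H1 P1 Ox0.
  by apply: mulr_gt0 => //; rewrite sqrtr_gt0 divr_gt0.
set K := 4%:R * ln Fs - 2%:R * ln G1 - 2%:R * ln G2.
set q1 := fun i j => Al q i j * (Num.sqrt (a i / Srow Om p i) * Srow Om p i / a i).
set q2 := fun i j => Bl q i j * (Num.sqrt (b j / Ccol Om p1 j) * Ccol Om p1 j / b j).
have q1ge0 : forall i j, 0 <= q1 i j.
  have [[A0 _] _] := Hq.
  move=> i j; apply: mulr_ge0; first exact: A0.
  by apply: divr_ge0; [apply: mulr_ge0 => //; apply: Srow_ge0 H | exact: ltW].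
have q2ge0 : forall i j, 0 <= q2 i j.
  have [[_ [B0 _]] _] := Hq.
  move=> i j; apply: mulr_ge0; first exact: B0.
  by apply: divr_ge0; [apply: mulr_ge0 => //; apply: Ccol_ge0 H1 | exact: ltW].
have pt : forall i j, (K + 4%:R) * piw i j - 2%:R / G1 * q1 i j - 2%:R / G2 * q2 i j
    <= piw i j * (ln (Bl p2 i j) - ln (Bl p i j)).
  move=> i j; case: (ltrP 0 (piw i j)) => hp; last first.
    have -> : piw i j = 0 by apply/eqP; rewrite eq_le hp piw_ge0.
    rewrite mulr0 !mul0r sub0r -opprD oppr_le0.
    by apply: addr_ge0; apply: mulr_ge0; rewrite ?q1ge0 ?q2ge0 // divr_ge0 // ltW.
  have [Oij A B] := piw_pos hp.
  have Bp : 0 < Bl p i j by case: (P i j Oij).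
  have B2p : 0 < Bl p2 i j by case: (P2 i j Oij).
  have S0 := Srow_gt0 H P Oij.
  have C0 := Ccol_gt0 H1 P1 Oij.
  rewrite -(ln_div' B2p Bp).
  have -> : Bl p2 i j / Bl p i j = a i * b j * Om i j ^+ 4 / (Srow Om p i * Ccol Om p1 j).
    rewrite /p2 (T2E b Om p1 i j) C0 /p1 (T1E a Om p i j) S0 /Bl /=.
    by field; rewrite !gt_eqF.
  have C := core Oij A B (apos i) (bpos j) S0 C0 F0 G10 G20.
  apply: le_trans _ C; rewrite le_eqVlt; apply/orP; left; apply/eqP.
  rewrite /piw /q1 /q2 /K -/Fs -/G1 -/G2.
  move: (ln Fs) (ln G1) (ln G2) => l1 l2 l3; ring.
have e1 : Lpot p2 - Lpot p = \sum_i \sum_j piw i j * (ln (Bl p2 i j) - ln (Bl p i j)).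
  by rewrite /Lpot -sum2B; apply: eq_bigr => i _; apply: eq_bigr => j _; rewrite mulrBr.
rewrite e1; apply: le_trans (ler_sum _ (fun i _ => ler_sum _ (fun j _ => pt i j))).
rewrite !sum2B !sum2Z piw_sum mulr1.
have s1 : \sum_i \sum_j q1 i j <= G1 := q1_bound apos H P Hq.
have s2 : \sum_i \sum_j q2 i j <= G2 := q2_bound bpos H1 P1 Hq.
have t1 : 2%:R / G1 * \sum_i \sum_j q1 i j <= 2%:R.
  apply: le_trans (ler_wpM2l _ s1) _; first by rewrite divr_ge0 // ltW.
  by rewrite divfK // gt_eqF.
have t2 : 2%:R / G2 * \sum_i \sum_j q2 i j <= 2%:R.
  apply: le_trans (ler_wpM2l _ s2) _; first by rewrite divr_ge0 // ltW.
  by rewrite divfK // gt_eqF.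
have l12 : ln G1 <= ln Fs by rewrite (ler_ln (posE G10) (posE F0)).
have l3 : ln G2 - ln Fs <= G2 / Fs - 1.
  by rewrite -(ln_div' G20 F0); apply: ln_le_sub1; rewrite divr_gt0.
rewrite /K; move: t1 t2 l12 l3.
move: (2%:R / G1 * \sum_i \sum_j q1 i j) (2%:R / G2 * \sum_i \sum_j q2 i j) (ln G1) (ln G2) (ln Fs) (G2 / Fs).
move=> u1 u2 v1 v2 v3 r; lra.
Qed.
End Step.

Section Interior.
Variables (R : realType) (m n : nat) (a : 'I_m -> R) (b : 'I_n -> R) (Om : 'M[R]_(m, n)).
Hypotheses (apos : forall i, 0 < a i) (bpos : forall j, 0 < b j).

Definition comb2 (t : R) (p r : mpair R m n) : mpair R m n :=
  (\sum_(k < 2) (if k == ord0 then 1 + t else - t) *: (if k == ord0 then p else r).1,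
   \sum_(k < 2) (if k == ord0 then 1 + t else - t) *: (if k == ord0 then p else r).2).

Lemma comb2_aff t p r : inAt a b Om p -> inAt a b Om r ->
  affine_hull (inAt a b Om) (comb2 t p r).
Proof.
move=> Hp Hr; exists 2%N, (fun k => if k == ord0 then 1 + t else - t),
  (fun k => if k == ord0 then p else r).
split; first by move=> k; case: ifP.
split; last by split.
by rewrite big_ord_recl big_ord1 /=; ring.
Qed.

Lemma comb2_1 t p r x y : (comb2 t p r).1 x y = (1 + t) * p.1 x y - t * r.1 x y.
Proof. by rewrite /comb2 /= summxE big_ord_recl big_ord1 /= !mxE mulNr. Qed.
Lemma comb2_2 t p r x y : (comb2 t p r).2 x y = (1 + t) * p.2 x y - t * r.2 x y.
Proof. by rewrite /comb2 /= summxE big_ord_recl big_ord1 /= !mxE mulNr. Qed.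

Lemma entry_bound1 p x y : inAt a b Om p -> 0 <= p.1 (lift ord0 x) y <= a x.
Proof.
move=> [[A0 [_ [Ar _]]] _]; rewrite A0 /= Ar.
by apply: (@sum_ge_term _ _ (fun l => p.1 (lift ord0 x) l)) => l; apply: A0.
Qed.

Lemma entry_bound2 p x y : inAt a b Om p -> 0 <= p.2 x (lift ord0 y) <= b y.
Proof.
move=> [[_ [B0 [_ [_ [Bc _]]]]] _]; rewrite B0 /= Bc.
by apply: (@sum_ge_term _ _ (fun l => p.2 l (lift ord0 y))) => l; apply: B0.
Qed.

Definition rA (p : mpair R m n) i j : mpair R m n :=
  (\matrix_(k, l) if k == lift ord0 i then (if l == lift ord0 j then a i else 0)
                  else p.1 k l, p.2).

Lemma rA_in p i j : inAt a b Om p -> 0 < Om i j -> inAt a b Om (rA p i j).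
Proof.
move=> [[A0 [B0 [Ar [A0j [Bc Bi0]]]]] [C1 [C2 C3]]] O.
have ne0 : forall i' : 'I_m, (ord0 == lift ord0 i') = false.
  by move=> i'; apply/negbTE; exact: neq_lift.
have ne0' : forall j' : 'I_n, (ord0 == lift ord0 j') = false.
  by move=> j'; apply/negbTE; exact: neq_lift.
have liftE : forall i' : 'I_m, (lift ord0 i' == lift ord0 i) = (i' == i).
  by move=> i'; apply: inj_eq; exact: lift_inj.
have liftE' : forall j' : 'I_n, (lift ord0 j' == lift ord0 j) = (j' == j).
  by move=> j'; apply: inj_eq; exact: lift_inj.
split.
  split.
    move=> k l; rewrite mxE; case: ifP => _; last exact: A0.
    by case: ifP => _ //; exact: ltW.
  split; first exact: B0.
  split.
    move=> i'; under eq_bigr => l _ do rewrite mxE liftE.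
    case: (eqVneq i' i) => [->|ne]; last by rewrite Ar.
    rewrite (bigD1 (lift ord0 j)) //= eqxx big1 ?addr0 //.
    by move=> l /negbTE ->.
  split; first by move=> l; rewrite mxE (negbTE (neq_lift _ _)) /= A0j.
  split; [exact: Bc | exact: Bi0].
split.
  move=> i' j' O'; split; last exact: (proj2 (C1 i' j' O')).
  rewrite mxE liftE liftE'.
  case: (eqVneq i' i) => [ei|ne]; last exact: (proj1 (C1 i' j' O')).
  case: (eqVneq j' j) => [ej|nej] //.
  by move: O'; rewrite ei ej leNgt O.
split; first exact: C2.
move=> i' Hi'; rewrite mxE liftE.
case: (eqVneq i' i) => [_|ne]; last exact: C3.
by rewrite (negbTE (neq_lift _ _)).
Qed.

Definition rB (p : mpair R m n) i j : mpair R m n :=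
  (p.1, \matrix_(k, l) if l == lift ord0 j then (if k == lift ord0 i then b j else 0)
                  else p.2 k l).

Lemma rB_in p i j : inAt a b Om p -> 0 < Om i j -> inAt a b Om (rB p i j).
Proof.
move=> [[A0 [B0 [Ar [A0j [Bc Bi0]]]]] [C1 [C2 C3]]] O.
have ne0 : forall i' : 'I_m, (ord0 == lift ord0 i') = false.
  by move=> i'; apply/negbTE; exact: neq_lift.
have ne0' : forall j' : 'I_n, (ord0 == lift ord0 j') = false.
  by move=> j'; apply/negbTE; exact: neq_lift.
have liftE : forall i' : 'I_m, (lift ord0 i' == lift ord0 i) = (i' == i).
  by move=> i'; apply: inj_eq; exact: lift_inj.
have liftE' : forall j' : 'I_n, (lift ord0 j' == lift ord0 j) = (j' == j).
  by move=> j'; apply: inj_eq; exact: lift_inj.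
split.
  split; first exact: A0.
  split.
    move=> k l; rewrite mxE; case: ifP => _; last exact: B0.
    by case: ifP => _ //; exact: ltW.
  split; first exact: Ar.
  split; first exact: A0j.
  split.
    move=> j'; under eq_bigr => k _ do rewrite mxE liftE'.
    case: (eqVneq j' j) => [->|ne]; last by rewrite Bc.
    rewrite (bigD1 (lift ord0 i)) //= eqxx big1 ?addr0 //.
    by move=> k /negbTE ->.
  by move=> k; rewrite mxE (negbTE (neq_lift _ _)) /= Bi0.
split.
  move=> i' j' O'; split; first exact: (proj1 (C1 i' j' O')).
  rewrite mxE liftE liftE'.
  case: (eqVneq j' j) => [ej|ne]; last exact: (proj2 (C1 i' j' O')).
  case: (eqVneq i' i) => [ei|nei] //.
  by move: O'; rewrite ei ej leNgt O.
split; last exact: C3.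
move=> j' Hj'; rewrite mxE liftE'.
case: (eqVneq j' j) => [_|ne]; last exact: C2.
by rewrite (negbTE (neq_lift _ _)).
Qed.

Lemma absd_le (u v c : R) : 0 <= u <= c -> 0 <= v <= c -> `|u - v| <= c.
Proof. by move=> /andP [u0 uc] /andP [v0 vc]; rewrite ler_norml; apply/andP; split; lra. Qed.

Lemma interior_pos p0 : rel_interior (inAt a b Om) p0 -> posP Om p0.
Proof.
move=> [H0 [eps e0 Heps]] i j O.
have [[A0 [B0 _]] _] := H0.
have comb_e : forall t u v : R, (1 + t) * u - t * v - u = t * (u - v) by move=> *; ring.
split.
  rewrite lt_neqAle A0 andbT; apply/negP => /eqP E; rewrite /Al in E.
  set t := eps / (2%:R * a i).
  have t0 : 0 < t by rewrite divr_gt0 // mulr_gt0.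
  have Hr := rA_in H0 O.
  have Hq : inAt a b Om (comb2 t p0 (rA p0 i j)).
    apply: Heps; first exact: comb2_aff.
      move=> x y; rewrite comb2_1 comb_e normrM gtr0_norm //.
      have dle : `|p0.1 x y - (rA p0 i j).1 x y| <= a i.
        rewrite /rA /= mxE; case: eqP => [ex|nex]; last by rewrite subrr normr0 ltW.
        rewrite ex; apply: absd_le; first exact: entry_bound1.
        by case: ifP => _; rewrite lexx ?ltW.
      apply: le_lt_trans (ler_wpM2l (ltW t0) dle) _.
      rewrite (_ : t * a i = eps / 2%:R); first lra.
      by rewrite /t; field; rewrite gt_eqF.
    move=> x y; rewrite comb2_2 comb_e /= subrr mulr0 normr0 //.
  have := (proj1 (proj1 Hq)) (lift ord0 i) (lift ord0 j).
  rewrite comb2_1 -E mulr0 add0r /rA /= mxE !eqxx oppr_ge0 leNgt.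
  by rewrite mulr_gt0.
rewrite lt_neqAle B0 andbT; apply/negP => /eqP E; rewrite /Bl in E.
set t := eps / (2%:R * b j).
have t0 : 0 < t by rewrite divr_gt0 // mulr_gt0.
have Hr := rB_in H0 O.
have Hq : inAt a b Om (comb2 t p0 (rB p0 i j)).
  apply: Heps; first exact: comb2_aff.
    move=> x y; rewrite comb2_1 comb_e /= subrr mulr0 normr0 //.
  move=> x y; rewrite comb2_2 comb_e normrM gtr0_norm //.
  have dle : `|p0.2 x y - (rB p0 i j).2 x y| <= b j.
    rewrite /rB /= mxE; case: eqP => [ey|ney]; last by rewrite subrr normr0 ltW.
    rewrite ey; apply: absd_le; first exact: entry_bound2.
    by case: ifP => _; rewrite lexx ?ltW.
  apply: le_lt_trans (ler_wpM2l (ltW t0) dle) _.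
  rewrite (_ : t * b j = eps / 2%:R); first lra.
  by rewrite /t; field; rewrite gt_eqF.
have := (proj1 (proj2 (proj1 Hq))) (lift ord0 i) (lift ord0 j).
rewrite comb2_2 -E mulr0 add0r /rB /= mxE !eqxx oppr_ge0 leNgt.
by rewrite mulr_gt0.
Qed.

End Interior.

Section Closed.
Variables (T : topologicalType) (R : realType).

Lemma closed_ge0f (h : T -> R) : continuous h -> closed [set v | 0 <= h v].
Proof.
move=> hc; have : closed (h @^-1` [set x : R | 0 <= x]).
  by apply: preimage_closed; [move=> x _; exact: hc | exact: closed_ge].
by [].
Qed.

Lemma closed_eqf (h : T -> R) (c : R) : continuous h -> closed [set v | c = h v].
Proof.
move=> hc; have : closed (h @^-1` [set x : R | x = c]).
  by apply: preimage_closed; [move=> x _; exact: hc | exact: closed_eq].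
rewrite (_ : h @^-1` [set x | x = c] = [set v | c = h v]) //.
by apply/seteqP; split => v /= ->.
Qed.

Lemma closed_all (I : Type) (P : I -> set T) :
  (forall i, closed (P i)) -> closed [set v | forall i, P i v].
Proof.
move=> Pc; have := @closed_bigI T I setT P (fun i _ => Pc i).
rewrite (_ : \bigcap_(i in setT) P i = [set v | forall i, P i v]) //.
by apply/seteqP; split => v /= H i //; apply: H.
Qed.

Lemma closed_eqf' (h : T -> R) (c : R) : continuous h -> closed [set v | h v = c].
Proof.
move=> hc; rewrite (_ : [set v | h v = c] = [set v | c = h v]); first exact: closed_eqf.
by apply/seteqP; split => v /= ->.
Qed.

Lemma closed_and (A B : set T) : closed A -> closed B -> closed [set v | A v /\ B v].
Proof. exact: closedI. Qed.

Lemma closed_imp (H : Prop) (A : set T) : closed A -> closed [set v | H -> A v].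
Proof.
move=> Ac; case: (pselect H) => h.
  by rewrite (_ : [set v | H -> A v] = A) //; apply/seteqP; split => v /=; auto.
by rewrite (_ : [set v | H -> A v] = setT) //; apply/seteqP; split => v /=; auto.
Qed.

Lemma cont_sum (I : Type) (r : seq I) (P : pred I) (f : I -> T -> R) :
  (forall i, continuous (f i)) -> continuous (fun v => \sum_(i <- r | P i) f i v).
Proof.
move=> fc; elim: r => [|i r IH].
  by under eq_fun => v do rewrite big_nil; exact: cst_continuous.
under eq_fun => v do rewrite big_cons.
case: (P i).
  by move=> v; apply: continuousD; [exact: fc | exact: IH].
exact: IH.
Qed.

End Closed.

Section Enc.
Variables (R : realType) (m n : nat) (a : 'I_m -> R) (b : 'I_n -> R) (Om : 'M[R]_(m, n)).

Definition NN := (m.+1 * n.+1 + m.+1 * n.+1)%N.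
Definition gdec (v : 'rV[R]_NN) : mpair R m n := (vec_mx (lsubmx v), vec_mx (rsubmx v)).
Definition genc (p : mpair R m n) : 'rV[R]_NN := row_mx (mxvec p.1) (mxvec p.2).
Lemma gdecK p : gdec (genc p) = p.
Proof. by rewrite /gdec /genc row_mxKl row_mxKr !mxvecK; case: p. Qed.
Lemma gdec1 v x y : (gdec v).1 x y = v 0 (lshift _ (mxvec_index x y)).
Proof. by rewrite /gdec /= !mxE. Qed.
Lemma gdec2 v x y : (gdec v).2 x y = v 0 (rshift _ (mxvec_index x y)).
Proof. by rewrite /gdec /= !mxE. Qed.
Lemma cont1 x y : continuous (fun v : 'rV[R]_NN => (gdec v).1 x y).
Proof. by under eq_fun do rewrite gdec1; exact: coord_continuous. Qed.
Lemma cont2 x y : continuous (fun v : 'rV[R]_NN => (gdec v).2 x y).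
Proof. by under eq_fun do rewrite gdec2; exact: coord_continuous. Qed.

Lemma closedK : closed [set v : 'rV[R]_NN | inAt a b Om (gdec v)].
Proof.
rewrite /inAt /inA.
repeat first [ apply: closed_and | apply: closed_all => ? | apply: closed_ge0f
  | apply: closed_eqf' | apply: closed_eqf ].
all: first [exact: cont1 | exact: cont2 |
  (apply: cont_sum => ?; first [exact: cont1 | exact: cont2])].
Qed.
Lemma contF : continuous (fun v : 'rV[R]_NN => Fobj Om (gdec v)).
Proof.
rewrite /Fobj; apply: cont_sum => i; apply: cont_sum => j.
move=> v.
pose h1 := fun v : 'rV[R]_NN => (gdec v).1 (lift ord0 i) (lift ord0 j).
pose h2 := fun v : 'rV[R]_NN => (gdec v).2 (lift ord0 i) (lift ord0 j).
have hc : {for v, continuous (fun v => Num.sqrt (h1 v * h2 v))}.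
  apply: (@continuous_comp _ _ _ (h1 \* h2) Num.sqrt).
    by apply: continuousM; [exact: cont1 | exact: cont2].
  exact: sqrt_continuous.
exact: (@continuousM _ _ (fun v => Num.sqrt (h1 v * h2 v)) (fun=> Om i j) v hc
   (@cst_continuous _ _ (Om i j) v)).
Qed.
Definition cB := \sum_i a i + \sum_j b j.
Hypotheses (apos : forall i, 0 < a i) (bpos : forall j, 0 < b j).

Lemma cB_ge_a i : a i <= cB.
Proof.
apply: le_trans (_ : \sum_i a i <= cB).
  by apply: (@sum_ge_term _ _ a i) => k; exact: ltW.
by rewrite /cB lerDl sumr_ge0 // => j _; exact: ltW.
Qed.

Lemma cB_ge_b j : b j <= cB.
Proof.
apply: le_trans (_ : \sum_j b j <= cB).
  by apply: (@sum_ge_term _ _ b j) => k; exact: ltW.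
by rewrite /cB lerDr sumr_ge0 // => i _; exact: ltW.
Qed.

Lemma cB_ge0 : 0 <= cB.
Proof. by rewrite /cB addr_ge0 // sumr_ge0 // => i _; exact: ltW. Qed.

Lemma entry_abs v k : inAt a b Om (gdec v) -> `|v 0 k| <= cB.
Proof.
move=> H; have [[_ [_ [_ [A0j [_ Bi0]]]]] _] := H.
rewrite -(splitK k); case: (fintype.split k) => [k1|k2] /=.
  case: (mxvec_indexP k1) => x y; rewrite -gdec1.
  case: (unliftP ord0 x) => [x'|] ->; last by rewrite A0j normr0 cB_ge0.
  have /andP [h1 h2] := entry_bound1 x' y H.
  by rewrite ger0_norm //; apply: le_trans h2 (cB_ge_a x').
case: (mxvec_indexP k2) => x y; rewrite -gdec2.
case: (unliftP ord0 y) => [y'|] ->; last by rewrite Bi0 normr0 cB_ge0.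
have /andP [h1 h2] := entry_bound2 x y' H.
by rewrite ger0_norm //; apply: le_trans h2 (cB_ge_b y').
Qed.

Lemma norm_bound v : inAt a b Om (gdec v) -> `|v| <= cB.
Proof.
move=> H; rewrite [leLHS]/Num.norm /= mx_normrE.
apply: bigmax_le; first exact: cB_ge0.
by move=> [i k] _ /=; rewrite (ord1 i); exact: entry_abs.
Qed.

Lemma boundedK : bounded_set [set v : 'rV[R]_NN | inAt a b Om (gdec v)].
Proof.
change (\forall M \near +oo,
  globally [set v : 'rV[R]_NN | inAt a b Om (gdec v)] [set x | `|x| <= M]).
near=> M => v /= Hv.
apply: le_trans (norm_bound Hv) _.
near: M; apply: nbhs_pinfty_ge; exact: num_real.
Unshelve. all: by end_near.
Qed.

End Enc.

Lemma exists_max (R : realType) (m n : nat) (a : 'I_m -> R) (b : 'I_n -> R)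
  (Om : 'M[R]_(m, n)) (p0 : mpair R m n) :
  (forall i, 0 < a i) -> (forall j, 0 < b j) ->
  inAt a b Om p0 ->
  exists ps, inAt a b Om ps /\ (forall q, inAt a b Om q -> Fobj Om q <= Fobj Om ps).
Proof.
move=> apos bpos H0.
set K := [set v : 'rV[R]_(NN m n) | inAt a b Om (gdec v)].
have K0 : K !=set0 by exists (genc p0); rewrite /K /= gdecK.
have cK : compact K := bounded_closed_compact (boundedK Om apos bpos) (@closedK R m n a b Om).
have [c cK' cmax] := compact_EVT_max K0 cK (continuous_subspaceT (@contF R m n Om)).
exists (gdec c); split; first exact: set_mem cK'.
move=> q Hq; have := cmax (genc q); rewrite gdecK; apply.
by apply: mem_set; rewrite /K /= gdecK.
Qed.


Unset Implicit Arguments. Set Strict Implicit.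

Theorem theorem2p15 (R : realType) (m n : nat) (a : 'I_m -> R) (b : 'I_n -> R)
  (Om : 'M[R]_(m, n)) (p0 : mpair R m n) :
  (0 < m)%N -> (0 < n)%N ->
  (forall i, 0 < a i) -> (forall j, 0 < b j) ->
  rel_interior (inAt a b Om) p0 ->
  exists2 pstar : mpair R m n,
    inAt a b Om pstar /\ (forall q, inAt a b Om q -> Fobj Om q <= Fobj Om pstar) &
    (fun k => Fobj Om (iterT a b Om p0 k)) @ \oo --> Fobj Om pstar.
Proof.
move=> _ _ apos bpos Hint.
have P0 := interior_pos apos bpos Hint.
have [H0 _] := Hint.
have [ps [Hps Hmax]] := exists_max apos bpos H0.
exists ps; first by split.
have iS : forall k, iterT a b Om p0 k.+1 = T2 b Om (T1 a Om (iterT a b Om p0 k)) by [].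
have inv : forall k, inAt a b Om (iterT a b Om p0 k) /\ posP Om (iterT a b Om p0 k).
  elim=> [|k [Hk Pk]]; first by split.
  rewrite iS; have [H1 P1] := T1_inv apos Hk Pk; exact: (T2_inv bpos H1 P1).
set Fs := Fobj Om ps.
have Fge0 := Fobj_ge0 Hps.
case: (ltrP 0 Fs) => F0; last first.
  have Fs0 : Fs = 0 by apply/eqP; rewrite eq_le F0 Fge0.
  have -> : (fun k => Fobj Om (iterT a b Om p0 k)) = (fun _ => Fs).
    apply: funext => k; have [Hk _] := inv k.
    apply/eqP; rewrite eq_le (Hmax _ Hk) /= Fs0; exact: Fobj_ge0 Hk.
  exact: cvg_cst.
set L := fun k => Lpot Om ps (iterT a b Om p0 k).
set u := fun k => 2%:R * (1 - Fobj Om (iterT a b Om p0 k.+1) / Fs).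
have ustep : forall k, u k <= L k.+1 - L k.
  move=> k; have [Hk Pk] := inv k; have [H1 _] := T1_inv apos Hk Pk.
  rewrite /u /L iS; apply: step => //.
    exact: Hmax.
  by rewrite -iS; apply: Hmax; exact: (proj1 (inv k.+1)).
have uge0 : forall k, 0 <= u k.
  move=> k; rewrite /u mulr_ge0 // subr_ge0 ler_pdivrMr // mul1r.
  exact: Hmax (proj1 (inv k.+1)).
set U := \sum_i \sum_j piw Om ps i j * ln (b j).
have Lub : forall k, L k <= U.
  move=> k; have [Hk Pk] := inv k.
  apply: ler_sum => i _; apply: ler_sum => j _.
  case: (ltrP 0 (piw Om ps i j)) => hp; last first.
    have -> : piw Om ps i j = 0 by apply/eqP; rewrite eq_le hp (piw_ge0 Hps F0 i j).
    by rewrite !mul0r.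
  have [Oij _ _] := piw_pos Hps hp.
  have Bp : 0 < Bl (iterT a b Om p0 k) i j by case: (Pk i j Oij).
  apply: ler_wpM2l; first exact: ltW.
  rewrite (ler_ln (posE Bp) (posE (bpos j))).
  apply: le_trans (colsum_le j Hk).
  have [[_ [B0 _]] _] := Hk.
  have t0 : forall i', 0 <= Bl (iterT a b Om p0 k) i' j by move=> i'; apply: B0.
  exact: (@sum_ge_term _ _ _ i t0).
have sum_bound : forall K, \sum_(0 <= k < K) u k <= L K - L 0.
  elim=> [|K IH]; first by rewrite big_geq // subrr.
  rewrite big_nat_recr //=.
  apply: le_trans (lerD IH (ustep K)) _.
  by rewrite addrC addrA subrK.
have cu : cvgn (series u).
  apply: nondecreasing_is_cvgn.
    exact: (@nondecreasing_series _ u predT 0 (fun k _ _ => uge0 k)).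
  exists (U - L 0%N) => _ [K _ <-].
  apply: le_trans (sum_bound K) _.
  by rewrite lerB // Lub.
have u0 := cvg_series_cvg_0 cu.
rewrite -cvg_shiftS.
have -> : [sequence Fobj Om (iterT a b Om p0 n0.+1)]_n0 = (fun k => Fs - Fs / 2%:R * u k).
  apply: funext => k; rewrite /u /=; field.
  by rewrite gt_eqF.
have h : (fun k => Fs - Fs / 2%:R * u k) @ \oo --> Fs - Fs / 2%:R * 0.
  apply: cvgB; first exact: cvg_cst.
  by apply: cvgM; [exact: cvg_cst | exact: u0].
by rewrite mulr0 subr0 in h.
Qed.
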